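(* Let $a>0$ with $a\sqrt{2}<\pi/2$, and let $(T,g_c)$ be the singular torus defined below. Then the systole of $(T,g_c)$ equals $\min\{4a,\ 2\pi\cos(a\sqrt{2})\}$.
   Context: Let $\Delta\subset\mathbb{R}^2$ be the square lattice generated by $(2a,0)$ and $(0,2a)$. On $\mathbb{R}^3$ with coordinates $(x,y,z)$ consider the continuous Riemannian metric $h=dx^2+dy^2+\cos^2\!\big(\mathrm{dist}((x,y),\Delta)\big)\,dz^2$, where $\mathrm{dist}$ is the Euclidean distance in $\mathbb{R}^2$ (the assumption $a\sqrt2<\pi/2$ guarantees this distance is $<\pi/2$, so the coefficient is positive). The length of a piecewise smooth curve $\gamma$ is $\int (h(\gamma',\gamma'))^{1/2}dt$. $(T,g_c)$ is the quotient of $(\mathbb{R}^3,h)$ by the group generated by the translations $(x,y,z)\mapsto(x+4a,y,z)$, $(x,y,z)\mapsto(x,y+4a,z)$, $(x,y,z)\mapsto(x,y,z+2\pi)$; $h$ is invariant under these and descends to a metric $g_c$. The systole is the infimum of the lengths of non-contractible piecewise smooth closed curves in $(T,g_c)$. *)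

(* Defs.v *)
From Stdlib Require Import Reals ZArith Lra.
From Coquelicot Require Import Coquelicot.
Open Scope R_scope.

Definition lattice_dist (a x y : R) : R :=
  real (Glb_Rbar (fun d => exists m n : Z,
          d = sqrt ((x - 2 * a * IZR m) ^ 2 + (y - 2 * a * IZR n) ^ 2))).

Definition h_norm (a x y vx vy vz : R) : R :=
  sqrt (vx ^ 2 + vy ^ 2 + (cos (lattice_dist a x y)) ^ 2 * vz ^ 2).

Definition smooth (f : R -> R) : Prop :=
  forall (k : nat) (t : R), ex_derive (Derive_n f k) t.

(** A curve [0,1] -> R^3 (a lift of a curve in T), together with
    a partition 0 = t_0 < ... < t_n = 1 and smooth pieces. *)
Record curve3 := {
  cx : R -> R; cy : R -> R; cz : R -> R;
  npieces : nat;
  part : nat -> R;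
  px : nat -> R -> R; py : nat -> R -> R; pz : nat -> R -> R }.

Definition piecewise_smooth (c : curve3) : Prop :=
  part c 0 = 0 /\ part c (npieces c) = 1 /\
  (forall k, (k < npieces c)%nat -> part c k < part c (S k)) /\
  (forall k, (k < npieces c)%nat ->
     smooth (px c k) /\ smooth (py c k) /\ smooth (pz c k)) /\
  (forall k t, (k < npieces c)%nat -> part c k <= t <= part c (S k) ->
     cx c t = px c k t /\ cy c t = py c k t /\ cz c t = pz c k t).

Fixpoint lsum (F : nat -> R) (n : nat) : R :=
  match n with O => 0 | S m => lsum F m + F m end.

Definition h_length (a : R) (c : curve3) : R :=
  lsum (fun k => RInt (fun t => h_norm a (px c k t) (py c k t)
                          (Derive (px c k) t) (Derive (py c k) t)
                          (Derive (pz c k) t))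
                      (part c k) (part c (S k)))
       (npieces c).

(** The projection of the curve to T = R^3 / <4a e1, 4a e2, 2pi e3> is closed *)
Definition closed_in_T (a : R) (c : curve3) : Prop :=
  exists m n k : Z,
    cx c 1 - cx c 0 = 4 * a * IZR m /\
    cy c 1 - cy c 0 = 4 * a * IZR n /\
    cz c 1 - cz c 0 = 2 * PI * IZR k.

(** T is identified (homeomorphically) with S^1 x S^1 x S^1, S^1 the unit
    circle in R^2, via (x,y,z) |-> (circ (4a) x, circ (4a) y, circ (2pi) z). *)
Definition circ (L x : R) : R * R := (cos (2 * PI * x / L), sin (2 * PI * x / L)).

Definition on_circle (p : R * R) : Prop := (fst p) ^ 2 + (snd p) ^ 2 = 1.

Definition in_sq (p : R * R) : Prop := 0 <= fst p <= 1 /\ 0 <= snd p <= 1.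

Definition cont_on_sq (u : R * R -> R * R) : Prop :=
  forall p, in_sq p -> filterlim u (within in_sq (locally p)) (locally (u p)).

(** The closed curve in T is contractible: freely homotopic, through closed
    curves in T, to a constant curve. *)
Definition contractible_in_T (a : R) (c : curve3) : Prop :=
  exists u1 u2 u3 : R * R -> R * R,
    cont_on_sq u1 /\ cont_on_sq u2 /\ cont_on_sq u3 /\
    (forall p, in_sq p -> on_circle (u1 p) /\ on_circle (u2 p) /\ on_circle (u3 p)) /\
    (forall t, 0 <= t <= 1 ->
       u1 (t, 0) = circ (4 * a) (cx c t) /\
       u2 (t, 0) = circ (4 * a) (cy c t) /\
       u3 (t, 0) = circ (2 * PI) (cz c t)) /\
    (exists q1 q2 q3, forall t, 0 <= t <= 1 ->
       u1 (t, 1) = q1 /\ u2 (t, 1) = q2 /\ u3 (t, 1) = q3) /\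
    (forall s, 0 <= s <= 1 ->
       u1 (0, s) = u1 (1, s) /\ u2 (0, s) = u2 (1, s) /\ u3 (0, s) = u3 (1, s)).

Definition systole (a : R) : Rbar :=
  Glb_Rbar (fun L => exists c : curve3,
    piecewise_smooth c /\ closed_in_T a c /\ ~ contractible_in_T a c /\
    L = h_length a c).

(* Main.v *)
Require Import Defs.
From Stdlib Require Import Reals Lra Lia ZArith Classical ClassicalEpsilon FunctionalExtensionality.
From Coquelicot Require Import Coquelicot.
Open Scope R_scope.

Lemma affine_Derive (f : R -> R) al be : (forall t, f t = al * t + be) ->
  forall t, is_derive f t al.
Proof.
  intros H t. apply is_derive_ext with (f := fun t => al * t + be).
  intro; now rewrite H.
  auto_derive; auto; ring.
Qed.

Lemma affine_smooth (f : R -> R) al be : (forall t, f t = al * t + be) -> smooth f.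
Proof.
  intros H.
  assert (K: forall k, exists al' be', forall t, Derive_n f k t = al' * t + be').
  { induction k as [|k [al' [be' IH]]].
    - exists al, be. simpl. exact H.
    - exists 0, al'. intro t. simpl.
      rewrite (is_derive_unique _ _ _ (affine_Derive _ _ _ IH t)). ring. }
  intros k t. destruct (K k) as [al' [be' Hk]].
  eexists. apply (affine_Derive _ _ _ Hk t).
Qed.

Definition LS (a x y : R) := fun d => exists m n : Z,
          d = sqrt ((x - 2 * a * IZR m) ^ 2 + (y - 2 * a * IZR n) ^ 2).

Lemma ld_spec a x y :
  (forall d, LS a x y d -> lattice_dist a x y <= d) /\
  (forall b, (forall d, LS a x y d -> b <= d) -> b <= lattice_dist a x y).
Proof.
  unfold lattice_dist. fold (LS a x y).
  destruct (Glb_Rbar_correct (LS a x y)) as [H1 H2].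
  destruct (Glb_Rbar (LS a x y)) as [r| |] eqn:E; simpl.
  - split.
    + intros d Hd. specialize (H1 d Hd). simpl in H1. exact H1.
    + intros b Hb. apply (H2 (Finite b)). intros d Hd. simpl. now apply Hb.
  - exfalso. specialize (H1 (sqrt ((x - 2*a*IZR 0)^2 + (y - 2*a*IZR 0)^2))).
    simpl in H1. apply H1. exists 0%Z, 0%Z. reflexivity.
  - exfalso. specialize (H2 (Finite 0)). simpl in H2. apply H2.
    intros d [m [n Hd]]. simpl. rewrite Hd. apply sqrt_pos.
Qed.

Lemma ld_nonneg a x y : 0 <= lattice_dist a x y.
Proof.
  apply (proj2 (ld_spec a x y)). intros d [m [n Hd]]. rewrite Hd. apply sqrt_pos.
Qed.

Lemma round_near (a x : R) : 0 < a -> exists m : Z, Rabs (x - 2 * a * IZR m) <= a.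
Proof.
  intros ha. exists (up (x / (2*a) - 1/2)).
  destruct (archimed (x / (2*a) - 1/2)) as [h1 h2].
  set (m := IZR (up (x / (2 * a) - 1 / 2))) in *.
  assert (E: x = 2*a*(x/(2*a))) by (field; lra).
  apply Rabs_le. split.
  - rewrite E at 1. nra.
  - rewrite E at 1. nra.
Qed.

Lemma ld_le a x y : 0 < a -> lattice_dist a x y <= a * sqrt 2.
Proof.
  intros ha. destruct (round_near a x ha) as [m Hm]. destruct (round_near a y ha) as [n Hn].
  apply Rle_trans with (sqrt ((x - 2 * a * IZR m) ^ 2 + (y - 2 * a * IZR n) ^ 2)).
  - apply (proj1 (ld_spec a x y)). exists m, n. reflexivity.
  - replace (a * sqrt 2) with (sqrt (a^2 * 2)).
    2:{ rewrite sqrt_mult by nra. rewrite sqrt_pow2 by lra. reflexivity. }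
    apply sqrt_le_1_alt.
    assert (A: (x - 2 * a * IZR m) ^ 2 <= a^2).
    { rewrite <- (pow2_abs (x - _)). apply pow_incr. split. apply Rabs_pos. exact Hm. }
    assert (B: (y - 2 * a * IZR n) ^ 2 <= a^2).
    { rewrite <- (pow2_abs (y - _)). apply pow_incr. split. apply Rabs_pos. exact Hn. }
    lra.
Qed.

Lemma norm_lip A B A' B' :
  sqrt (A^2 + B^2) <= sqrt (A'^2 + B'^2) + Rabs (A - A') + Rabs (B - B').
Proof.
  set (r := sqrt (A'^2 + B'^2)).
  assert (Hr: 0 <= r) by apply sqrt_pos.
  assert (Hr2: r * r = A'^2 + B'^2) by (apply sqrt_sqrt; nra).
  assert (HA: Rabs A' <= r).
  { unfold r. rewrite <- sqrt_pow2 with (x := Rabs A') by apply Rabs_pos.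
    apply sqrt_le_1_alt. rewrite pow2_abs. nra. }
  assert (HB: Rabs B' <= r).
  { unfold r. rewrite <- sqrt_pow2 with (x := Rabs B') by apply Rabs_pos.
    apply sqrt_le_1_alt. rewrite pow2_abs. nra. }
  set (e1 := Rabs (A - A')). set (e2 := Rabs (B - B')).
  assert (He1: 0 <= e1) by apply Rabs_pos. assert (He2: 0 <= e2) by apply Rabs_pos.
  rewrite <- (sqrt_pow2 (r + e1 + e2)) by lra.
  apply sqrt_le_1_alt.
  assert (X1: A^2 <= A'^2 + 2 * Rabs A' * e1 + e1^2).
  { assert (Rabs (A' * (A - A')) <= Rabs A' * e1) by (rewrite Rabs_mult; unfold e1, e2; lra).
    assert (A' * (A - A') <= Rabs (A' * (A - A'))) by apply Rle_abs.
    assert ((A - A')^2 = e1^2) by (unfold e1; now rewrite pow2_abs).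
    assert (A^2 = A'^2 + 2 * (A' * (A - A')) + (A - A')^2) by ring. lra. }
  assert (X2: B^2 <= B'^2 + 2 * Rabs B' * e2 + e2^2).
  { assert (Rabs (B' * (B - B')) <= Rabs B' * e2) by (rewrite Rabs_mult; unfold e1, e2; lra).
    assert (B' * (B - B') <= Rabs (B' * (B - B'))) by apply Rle_abs.
    assert ((B - B')^2 = e2^2) by (unfold e2; now rewrite pow2_abs).
    assert (B^2 = B'^2 + 2 * (B' * (B - B')) + (B - B')^2) by ring. lra. }
  nra.
Qed.

Lemma ld_lip a x y x' y' :
  lattice_dist a x y <= lattice_dist a x' y' + Rabs (x - x') + Rabs (y - y').
Proof.
  assert (lattice_dist a x y - Rabs (x - x') - Rabs (y - y') <= lattice_dist a x' y').
  2: lra.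
  apply (proj2 (ld_spec a x' y')). intros d [m [n Hd]]. rewrite Hd.
  assert (lattice_dist a x y <= sqrt ((x - 2 * a * IZR m) ^ 2 + (y - 2 * a * IZR n) ^ 2)).
  { apply (proj1 (ld_spec a x y)). exists m, n. reflexivity. }
  pose proof (norm_lip (x - 2 * a * IZR m) (y - 2 * a * IZR n) (x' - 2 * a * IZR m) (y' - 2 * a * IZR n)).
  replace (x - 2 * a * IZR m - (x' - 2 * a * IZR m)) with (x - x') in H0 by ring.
  replace (y - 2 * a * IZR n - (y' - 2 * a * IZR n)) with (y - y') in H0 by ring.
  lra.
Qed.

Lemma ld_aa a : 0 < a -> lattice_dist a a a = a * sqrt 2.
Proof.
  intros ha. apply Rle_antisym. now apply ld_le.
  apply (proj2 (ld_spec a a a)). intros d [m [n Hd]]. rewrite Hd.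
  replace (a * sqrt 2) with (sqrt (a^2 * 2)).
  2:{ rewrite sqrt_mult by nra. rewrite sqrt_pow2 by lra. reflexivity. }
  apply sqrt_le_1_alt.
  assert (K: forall k : Z, a^2 <= (a - 2 * a * IZR k)^2).
  { intro k. destruct (Z.le_gt_cases k 0) as [h|h].
    - apply IZR_le in h. nra.
    - apply Zlt_le_succ in h. apply IZR_le in h. simpl in h. nra. }
  pose proof (K m). pose proof (K n). lra.
Qed.

Lemma ballR (x y e : R) : ball x e y <-> Rabs (y - x) < e.
Proof. reflexivity. Qed.

Lemma cos_ed u p : cont_on_sq u -> in_sq p -> forall eps, 0 < eps ->
  exists del, 0 < del /\ forall q, in_sq q -> Rabs (fst q - fst p) < del ->
    Rabs (snd q - snd p) < del ->
    Rabs (fst (u q) - fst (u p)) < eps /\ Rabs (snd (u q) - snd (u p)) < eps.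
Proof.
  intros Hc Hp eps He.
  pose proof (proj1 (filterlim_locally _ _) (Hc p Hp) (mkposreal eps He)) as H.
  destruct H as [del H]. exists del. split. apply cond_pos.
  intros q Hq h1 h2. specialize (H q). 
  assert (B: ball p del q) by (split; apply ballR; auto).
  specialize (H B Hq). destruct H as [H1 H2]. apply ballR in H1. apply ballR in H2.
  simpl in *. auto.
Qed.

Lemma ed_cos u : (forall p, in_sq p -> forall eps, 0 < eps ->
  exists del, 0 < del /\ forall q, in_sq q -> Rabs (fst q - fst p) < del ->
    Rabs (snd q - snd p) < del ->
    Rabs (fst (u q) - fst (u p)) < eps /\ Rabs (snd (u q) - snd (u p)) < eps) ->
  cont_on_sq u.
Proof.
  intros H p Hp. apply filterlim_locally. intros eps.
  destruct (H p Hp eps (cond_pos eps)) as [del [Hd K]].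
  exists (mkposreal del Hd). intros q [B1 B2] Hq.
  apply ballR in B1. apply ballR in B2.
  destruct (K q Hq B1 B2). split; apply ballR; auto.
Qed.

Lemma unif_cont u : cont_on_sq u -> forall eps, 0 < eps ->
  exists d, 0 < d /\ forall p q, in_sq p -> in_sq q ->
    Rabs (fst q - fst p) < d -> Rabs (snd q - snd p) < d ->
    Rabs (fst (u q) - fst (u p)) < eps /\ Rabs (snd (u q) - snd (u p)) < eps.
Proof.
  intros Hc eps He.
  assert (Ex: forall p, exists d, 0 < d /\ (in_sq p -> forall q, in_sq q ->
    Rabs (fst q - fst p) < 2 * d -> Rabs (snd q - snd p) < 2 * d ->
    Rabs (fst (u q) - fst (u p)) < eps / 2 /\ Rabs (snd (u q) - snd (u p)) < eps / 2)).
  { intros p. destruct (classic (in_sq p)) as [Hp|Hp].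
    - destruct (cos_ed u p Hc Hp (eps/2)) as [del [Hd K]]. lra.
      exists (del/2). split. lra. intros _ q Hq h1 h2. apply K; auto; lra.
    - exists 1. split. lra. intro; contradiction. }
  set (f := fun p => proj1_sig (constructive_indefinite_description _ (Ex p))).
  assert (Hf: forall p, 0 < f p /\ (in_sq p -> forall q, in_sq q ->
    Rabs (fst q - fst p) < 2 * f p -> Rabs (snd q - snd p) < 2 * f p ->
    Rabs (fst (u q) - fst (u p)) < eps / 2 /\ Rabs (snd (u q) - snd (u p)) < eps / 2)).
  { intro p. unfold f. destruct (constructive_indefinite_description _ (Ex p)). simpl. auto. }
  set (delta := fun x y => mkposreal (f (x, y)) (proj1 (Hf (x, y)))).
  destruct (compactness_value_2d 0 1 0 1 delta) as [d Hd].
  exists d. split. apply cond_pos.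
  intros p q Hp Hq h1 h2.
  destruct p as [p1 p2]. destruct Hp as [hp1 hp2]. simpl in hp1, hp2.
  specialize (Hd p1 p2 hp1 hp2).
  apply NNPP. intro Hn. apply Hd. intros [x [y [hx [hy [k1 [k2 k3]]]]]].
  apply Hn. simpl in k1, k2, k3.
  assert (Hxy: in_sq (x, y)) by (split; simpl; auto).
  pose proof (Rabs_pos (p1 - x)). pose proof (Rabs_pos (p2 - y)).
  destruct (proj2 (Hf (x, y)) Hxy (p1, p2)) as [A1 A2].
  split; simpl; auto. simpl. lra. simpl. lra.
  destruct (proj2 (Hf (x, y)) Hxy q) as [B1 B2]; auto.
  simpl in *.
  apply Rle_lt_trans with (Rabs (fst q - p1) + Rabs (p1 - x)).
  replace (fst q - x) with ((fst q - p1) + (p1 - x)) by ring. apply Rabs_triang.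
  lra.
  simpl in *.
  apply Rle_lt_trans with (Rabs (snd q - p2) + Rabs (p2 - y)).
  replace (snd q - y) with ((snd q - p2) + (p2 - y)) by ring. apply Rabs_triang.
  lra.
  simpl in *. split.
  - replace (fst (u q) - fst (u (p1, p2))) with
      ((fst (u q) - fst (u (x,y))) - (fst (u (p1,p2)) - fst (u (x,y)))) by ring.
    eapply Rle_lt_trans. apply Rabs_triang. rewrite Rabs_Ropp. lra.
  - replace (snd (u q) - snd (u (p1, p2))) with
      ((snd (u q) - snd (u (x,y))) - (snd (u (p1,p2)) - snd (u (x,y)))) by ring.
    eapply Rle_lt_trans. apply Rabs_triang. rewrite Rabs_Ropp. lra.
Qed.

Definition cr (p q : R * R) := fst p * snd q - snd p * fst q.
Definition dt (p q : R * R) := fst p * fst q + snd p * snd q.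
Definition ang p q := atan (cr p q / dt p q).

Definition near (p q : R * R) := on_circle p /\ on_circle q /\
  Rabs (fst p - fst q) < 1/4 /\ Rabs (snd p - snd q) < 1/4.

Lemma near_dt p q : near p q -> 15/16 < dt p q /\ Rabs (cr p q / dt p q) < 1.
Proof.
  destruct p as [p1 p2], q as [q1 q2]. unfold near, on_circle, dt, cr; cbn [fst snd].
  intros [h1 [h2 [h3 h4]]].
  assert (A: (p1 - q1)^2 < 1/16).
  { rewrite <- pow2_abs. pose proof (Rabs_pos (p1 - q1)). nra. }
  assert (B: (p2 - q2)^2 < 1/16).
  { rewrite <- pow2_abs. pose proof (Rabs_pos (p2 - q2)). nra. }
  assert (D: 15/16 < p1 * q1 + p2 * q2) by nra.
  split. exact D.
  assert (L: (p1 * q2 - p2 * q1)^2 + (p1 * q1 + p2 * q2)^2 = 1).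
  { transitivity ((p1^2 + p2^2) * (q1^2+q2^2)). ring. rewrite h1, h2; ring. }
  rewrite Rabs_div by lra. rewrite (Rabs_pos_eq (p1 * q1 + p2 * q2)) by lra.
  apply (Rmult_lt_reg_r (p1 * q1 + p2 * q2)). lra.
  unfold Rdiv. rewrite Rmult_assoc, Rinv_l by lra. rewrite Rmult_1_r, Rmult_1_l.
  apply Rabs_def1; nra.
Qed.

Lemma atan_small x : Rabs x < 1 -> - (PI / 4) < atan x < PI / 4.
Proof.
  intros H. apply Rabs_def2 in H. destruct H as [h1 h2].
  split.
  - rewrite <- atan_1, <- atan_opp. now apply atan_increasing.
  - rewrite <- atan_1. now apply atan_increasing.
Qed.

Lemma ang_add p q r : near p q -> near q r -> near p r ->
  ang p q + ang q r = ang p r.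
Proof.
  intros Hpq Hqr Hpr.
  destruct (near_dt _ _ Hpq) as [d1 s1].
  destruct (near_dt _ _ Hqr) as [d2 s2].
  destruct (near_dt _ _ Hpr) as [d3 s3].
  pose proof (atan_small _ s1) as A1. pose proof (atan_small _ s2) as A2.
  unfold ang. set (x := cr p q / dt p q) in *. set (y := cr q r / dt q r) in *.
  pose proof PI_RGT_0.
  assert (Hx: Rabs x < 1) by exact s1. assert (Hy: Rabs y < 1) by exact s2.
  apply Rabs_def2 in Hx. apply Rabs_def2 in Hy.
  rewrite <- (atan_tan (atan x + atan y)) by lra.
  f_equal.
  assert (c1: cos (atan x) <> 0) by (apply Rgt_not_eq, cos_gt_0; lra).
  assert (c2: cos (atan y) <> 0) by (apply Rgt_not_eq, cos_gt_0; lra).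
  assert (c3: cos (atan x + atan y) <> 0) by (apply Rgt_not_eq, cos_gt_0; lra).
  assert (XY: x * y < 1) by nra.
  rewrite tan_plus; auto. 2: rewrite !tan_atan; lra.
  rewrite !tan_atan.
  destruct p as [p1 p2], q as [q1 q2], r as [r1 r2].
  destruct Hpq as [hp [hq _]]. destruct Hqr as [_ [hr _]].
  unfold on_circle in *. cbn [fst snd] in *.
  unfold x, y, cr, dt in *. cbn [fst snd] in *.
  set (D1 := p1 * q1 + p2 * q2) in *. set (D2 := q1 * r1 + q2 * r2) in *.
  set (D3 := p1 * r1 + p2 * r2) in *.
  assert (E1: D1 * D2 - (p1 * q2 - p2 * q1) * (q1 * r2 - q2 * r1) = D3)
    by (unfold D1, D2, D3; replace (p1*r1+p2*r2) with ((p1 * r1 + p2 * r2) * (q1^2+q2^2)) by (rewrite hq; ring); ring).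
  assert (E2: (p1 * q2 - p2 * q1) * D2 + D1 * (q1 * r2 - q2 * r1) = p1 * r2 - p2 * r1)
    by (unfold D1, D2; replace (p1*r2-p2*r1) with ((p1 * r2 - p2 * r1) * (q1^2+q2^2)) by (rewrite hq; ring); ring).
  rewrite <- E1, <- E2. field. split; [lra|]. split; [lra|].
  intro Z. lra.
Qed.

Lemma ang_anti p q : ang q p = - ang p q.
Proof.
  unfold ang, cr, dt. rewrite <- atan_opp. f_equal.
  replace (fst q * fst p + snd q * snd p) with (fst p * fst q + snd p * snd q) by ring.
  replace (fst q * snd p - snd q * fst p) with (- (fst p * snd q - snd p * fst q)) by ring.
  unfold Rdiv. ring.
Qed.

Lemma ang_self p : ang p p = 0.
Proof.
  unfold ang, cr. replace (fst p * snd p - snd p * fst p) with 0 by ring.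
  unfold Rdiv. rewrite Rmult_0_l. apply atan_0.
Qed.

Lemma ang_circ al be : - (PI/2) < be - al < PI/2 ->
  ang (cos al, sin al) (cos be, sin be) = be - al.
Proof.
  intros H. unfold ang, cr, dt; simpl.
  replace (cos al * sin be - sin al * cos be) with (sin (be - al)) by (rewrite sin_minus; ring).
  replace (cos al * cos be + sin al * sin be) with (cos (be - al)) by (rewrite cos_minus; ring).
  fold (tan (be - al)). now apply atan_tan.
Qed.

Lemma lsum_tele (A B C : nat -> R) n :
  (forall i, (i < n)%nat -> A i - B i = C i - C (S i)) ->
  lsum A n - lsum B n = C 0%nat - C n.
Proof.
  induction n as [|n IH]; intros H; simpl. ring.
  assert (E := H n (Nat.lt_succ_diag_r n)).
  rewrite <- (Rplus_0_r (C 0%nat - C (S n))).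
  replace (lsum A n + A n - (lsum B n + B n)) with ((lsum A n - lsum B n) + (A n - B n)) by ring.
  rewrite IH by (intros; apply H; lia). rewrite E. ring.
Qed.

Lemma lsum_const (c : R) n : lsum (fun _ => c) n = INR n * c.
Proof. induction n; simpl lsum. simpl; ring. rewrite IHn, S_INR. ring. Qed.

Lemma lsum_ext (A B : nat -> R) n : (forall i, (i < n)%nat -> A i = B i) -> lsum A n = lsum B n.
Proof. induction n; intros H; simpl. auto. rewrite IHn, H; auto; lia. Qed.

Lemma no_contract u q0 : cont_on_sq u -> (forall p, in_sq p -> on_circle (u p)) ->
  (forall t, 0 <= t <= 1 -> u (t, 0) = (cos (2 * PI * t), sin (2 * PI * t))) ->
  (forall t, 0 <= t <= 1 -> u (t, 1) = q0) ->
  (forall s, 0 <= s <= 1 -> u (0, s) = u (1, s)) -> False.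
Proof.
  intros Hc Hcirc H0 H1 Hb.
  destruct (unif_cont u Hc (1/4)) as [d [Hd Hu]]. lra.
  destruct (INR_unbounded (Rmax (1/d) 8)) as [N HN].
  assert (HN8: 8 < INR N) by (pose proof (Rmax_r (1/d) 8); lra).
  assert (HNd: 1 / INR N < d).
  { pose proof (Rmax_l (1/d) 8).
    apply (Rmult_lt_reg_r (INR N)). lra. unfold Rdiv. rewrite Rmult_1_l, Rinv_l by lra.
    apply (Rmult_lt_reg_l (/ d)). apply Rinv_0_lt_compat; lra.
    rewrite Rmult_1_r, <- Rmult_assoc, Rinv_l by lra. lra. }
  set (r := fun i : nat => INR i / INR N).
  set (g := fun i j : nat => u (r i, r j)).
  assert (Hr: forall i, (i <= N)%nat -> 0 <= r i <= 1).
  { intros i Hi. unfold r. apply le_INR in Hi. pose proof (pos_INR i). split.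
    apply Rdiv_le_0_compat; lra.
    apply (Rmult_le_reg_r (INR N)). lra. unfold Rdiv. rewrite Rmult_assoc, Rinv_l by lra. lra. }
  assert (HrS: forall i, r (S i) - r i = 1 / INR N).
  { intro i. unfold r. rewrite S_INR. field. lra. }
  assert (Hr0: r 0%nat = 0) by (unfold r; simpl; unfold Rdiv; ring).
  assert (HrN: r N = 1) by (unfold r; field; lra).
  assert (Hnear: forall i i' j j', (i <= N)%nat -> (i' <= N)%nat -> (j <= N)%nat -> (j' <= N)%nat ->
     Rabs (r i' - r i) < d -> Rabs (r j' - r j) < d -> near (g i j) (g i' j')).
  { intros i i' j j' hi hi' hj hj' h1 h2.
    assert (P: in_sq (r i, r j)) by (split; simpl; auto).
    assert (Q: in_sq (r i', r j')) by (split; simpl; auto).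
    destruct (Hu _ _ P Q h1 h2) as [k1 k2].
    unfold g. split. apply Hcirc; auto. split. apply Hcirc; auto.
    rewrite Rabs_minus_sym. split; auto. rewrite Rabs_minus_sym; auto. }
  assert (D0: Rabs (r 0%nat - r 0%nat) < d) by (rewrite Rminus_diag, Rabs_R0; lra).
  assert (DS: forall i, Rabs (r (S i) - r i) < d).
  { intro i. rewrite HrS. rewrite Rabs_pos_eq; auto. left. apply Rdiv_lt_0_compat; lra. }
  assert (DZ: forall i, Rabs (r i - r i) < d) by (intro; rewrite Rminus_diag, Rabs_R0; lra).
  set (W := fun j => lsum (fun i => ang (g i j) (g (S i) j)) N).
  set (V := fun i j => ang (g i j) (g i (S j))).
  assert (Step: forall j, (j < N)%nat -> W j - W (S j) = V 0%nat j - V N j).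
  { intros j Hj. unfold W. apply (lsum_tele _ _ (fun i => V i j)). intros i Hi.
    unfold V.
    assert (E1: ang (g i j) (g (S i) j) + ang (g (S i) j) (g (S i) (S j)) = ang (g i j) (g (S i) (S j)))
      by (apply ang_add; apply Hnear; auto; lia).
    assert (E2: ang (g i j) (g i (S j)) + ang (g i (S j)) (g (S i) (S j)) = ang (g i j) (g (S i) (S j)))
      by (apply ang_add; apply Hnear; auto; lia).
    lra. }
  assert (VE: forall j, (j < N)%nat -> V 0%nat j = V N j).
  { intros j Hj. unfold V, g. rewrite Hr0, HrN. rewrite Hb by (apply Hr; lia).
    rewrite (Hb (r (S j))) by (apply Hr; lia). reflexivity. }
  assert (Wc: forall j, (j <= N)%nat -> W j = W 0%nat).
  { induction j; intros Hj. reflexivity.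
    rewrite <- IHj by lia. pose proof (Step j ltac:(lia)). rewrite VE in H by lia. lra. }
  assert (WN: W N = 0).
  { unfold W. rewrite (lsum_ext _ (fun _ => 0)). rewrite lsum_const; ring.
    intros i Hi. unfold g. rewrite HrN, !H1 by (apply Hr; lia). apply ang_self. }
  assert (W0: W 0%nat = 2 * PI).
  { unfold W. rewrite (lsum_ext _ (fun _ => 2 * PI / INR N)). rewrite lsum_const. field. lra.
    intros i Hi. unfold g. rewrite Hr0, !H0 by (apply Hr; lia).
    rewrite ang_circ. replace (2 * PI * r (S i) - 2 * PI * r i) with (2 * PI * (r (S i) - r i)) by ring.
    rewrite HrS. field. lra.
    replace (2 * PI * r (S i) - 2 * PI * r i) with (2 * PI * (r (S i) - r i)) by ring.
    rewrite HrS. pose proof PI_RGT_0.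
    assert (0 < 2 * PI * (1 / INR N) < PI / 2).
    { split. apply Rmult_lt_0_compat. lra. apply Rdiv_lt_0_compat; lra.
      apply (Rmult_lt_reg_r (INR N)). lra. field_simplify; try lra. nra. }
    lra. }
  pose proof (Wc N (le_n N)). pose proof PI_RGT_0. lra.
Qed.


Lemma cplus (f g : R -> R) x : continuous f x -> continuous g x -> continuous (fun y => f y + g y) x.
Proof. intros. apply (continuous_plus f g x); auto. Qed.
Lemma cmult (f g : R -> R) x : continuous f x -> continuous g x -> continuous (fun y => f y * g y) x.
Proof. intros. apply (continuous_mult f g x); auto. Qed.
Lemma cpow2 (f : R -> R) x : continuous f x -> continuous (fun y => f y ^ 2) x.
Proof. intros. apply (continuous_ext (fun y => f y * f y)). intro; simpl; ring. now apply cmult. Qed.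

Lemma ld_cont a (X Y : R -> R) t : continuous X t -> continuous Y t ->
  continuous (fun s => lattice_dist a (X s) (Y s)) t.
Proof.
  intros HX HY. apply filterlim_locally. intros eps.
  assert (e2: 0 < eps / 2) by (pose proof (cond_pos eps); lra).
  pose proof (proj1 (filterlim_locally _ _) HX (mkposreal _ e2)) as A.
  pose proof (proj1 (filterlim_locally _ _) HY (mkposreal _ e2)) as B.
  generalize (filter_and _ _ A B). apply filter_imp. intros s [h1 h2].
  apply ballR in h1. apply ballR in h2. apply ballR. simpl in *.
  pose proof (ld_lip a (X s) (Y s) (X t) (Y t)).
  pose proof (ld_lip a (X t) (Y t) (X s) (Y s)).
  rewrite (Rabs_minus_sym (X t)), (Rabs_minus_sym (Y t)) in H0.
  change (Rabs (X s - X t) < eps/2) in h1. change (Rabs (Y s - Y t) < eps/2) in h2. apply Rabs_def1; lra.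
Qed.

Lemma smooth_cont f t : smooth f -> continuous f t.
Proof. intros H. exact (ex_derive_continuous f t (H 0%nat t)). Qed.
Lemma smooth_dcont f t : smooth f -> continuous (Derive f) t.
Proof. intros H. exact (ex_derive_continuous (Derive f) t (H 1%nat t)). Qed.
Lemma smooth_ex f t : smooth f -> ex_derive f t.
Proof. intros H. exact (H 0%nat t). Qed.

Lemma integrand_cont a X Y Z t : smooth X -> smooth Y -> smooth Z ->
  continuous (fun t => h_norm a (X t) (Y t) (Derive X t) (Derive Y t) (Derive Z t)) t.
Proof.
  intros hX hY hZ. unfold h_norm. apply continuous_sqrt_comp.
  apply cplus. apply cplus. apply cpow2, smooth_dcont; auto. apply cpow2, smooth_dcont; auto.
  apply cmult. apply cpow2. apply continuous_cos_comp. apply ld_cont; apply smooth_cont; auto.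
  apply cpow2, smooth_dcont; auto.
Qed.

Lemma piece_bound (I F : R -> R) C l r : l < r -> (forall t, continuous I t) ->
  smooth F -> (forall t, C * Derive F t <= I t) -> C * (F r - F l) <= RInt I l r.
Proof.
  intros Hlr HI HF Hb.
  assert (E: RInt (fun t => C * Derive F t) l r = C * (F r - F l)).
  { assert (S: RInt (fun t => C * Derive F t) l r = C * RInt (Derive F) l r).
    { apply (RInt_scal (Derive F) l r C).
      apply ex_RInt_continuous. intros; apply smooth_dcont; auto. }
    rewrite S.
    - rewrite RInt_Derive. reflexivity. intros; apply smooth_ex; auto.
      intros; apply smooth_dcont; auto. }
  rewrite <- E. apply RInt_le. lra.
  apply (ex_RInt_continuous (V:=R_CompleteNormedModule)). intros. apply cmult. apply continuous_const. apply smooth_dcont; auto.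
  apply (ex_RInt_continuous (V:=R_CompleteNormedModule)). intros; auto.
  intros; auto.
Qed.

Definition integrand a (c : curve3) k := fun t => h_norm a (px c k t) (py c k t)
   (Derive (px c k) t) (Derive (py c k) t) (Derive (pz c k) t).

Lemma length_bound a c C (P : nat -> R -> R) (G : R -> R) :
  piecewise_smooth c ->
  (forall k, (k < npieces c)%nat -> smooth (P k)) ->
  (forall k t, (k < npieces c)%nat -> part c k <= t <= part c (S k) -> G t = P k t) ->
  (forall k t, (k < npieces c)%nat -> C * Derive (P k) t <= integrand a c k t) ->
  C * (G 1 - G 0) <= h_length a c.
Proof.
  intros [h0 [h1 [hinc [hsm hag]]]] HP HG Hb.
  assert (K: forall j, (j <= npieces c)%nat ->
     C * (G (part c j) - G (part c 0%nat)) <= lsum (fun k => RInt (integrand a c k) (part c k) (part c (S k))) j).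
  { induction j; intros Hj. simpl. lra.
    simpl. specialize (IHj ltac:(lia)).
    assert (Hl := hinc j ltac:(lia)).
    pose proof (piece_bound (integrand a c j) (P j) C (part c j) (part c (S j)) Hl).
    destruct (hsm j ltac:(lia)) as [s1 [s2 s3]].
    assert (HC: forall t, continuous (integrand a c j) t) by (intro; unfold integrand; apply integrand_cont; auto).
    specialize (H HC (HP j ltac:(lia)) (fun t => Hb j t ltac:(lia))).
    rewrite <- (HG j (part c j)) in H by (auto; lra).
    rewrite <- (HG j (part c (S j))) in H by (auto; lra).
    lra. }
  specialize (K (npieces c) (le_n _)). rewrite h1, h0 in K. exact K.
Qed.

Lemma sqrt_ge w A : w ^ 2 <= A -> w <= sqrt A.
Proof.
  intros H. destruct (Rle_dec w 0). pose proof (sqrt_pos A). lra.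
  rewrite <- (sqrt_pow2 w) by lra. apply sqrt_le_1_alt. exact H.
Qed.

Lemma hx_bound a x y vx vy vz C : C ^ 2 = 1 -> C * vx <= h_norm a x y vx vy vz.
Proof.
  intros HC. unfold h_norm. apply sqrt_ge.
  assert (0 <= (cos (lattice_dist a x y))^2 * vz^2) by (apply Rmult_le_pos; apply pow2_ge_0).
  pose proof (pow2_ge_0 vy).
  replace ((C * vx)^2) with (C^2 * vx^2) by ring. rewrite HC. lra.
Qed.

Lemma hy_bound a x y vx vy vz C : C ^ 2 = 1 -> C * vy <= h_norm a x y vx vy vz.
Proof.
  intros HC. unfold h_norm. apply sqrt_ge.
  assert (0 <= (cos (lattice_dist a x y))^2 * vz^2) by (apply Rmult_le_pos; apply pow2_ge_0).
  pose proof (pow2_ge_0 vx).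
  replace ((C * vy)^2) with (C^2 * vy^2) by ring. rewrite HC. lra.
Qed.

Lemma cos_ld_ge a x y : 0 < a -> a * sqrt 2 < PI / 2 ->
  0 < cos (a * sqrt 2) <= cos (lattice_dist a x y).
Proof.
  intros ha ha2. pose proof (ld_nonneg a x y). pose proof (ld_le a x y ha).
  pose proof PI_RGT_0. pose proof (sqrt_pos 2).
  split. apply cos_gt_0. nra. lra.
  destruct (Req_dec (lattice_dist a x y) (a * sqrt 2)) as [e|e]. rewrite e; lra.
  left. apply cos_decreasing_1; try lra.
Qed.

Lemma hz_bound a x y vx vy vz C : 0 < a -> a * sqrt 2 < PI / 2 ->
  C ^ 2 = (cos (a * sqrt 2)) ^ 2 -> C * vz <= h_norm a x y vx vy vz.
Proof.
  intros ha ha2 HC. unfold h_norm. apply sqrt_ge.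
  destruct (cos_ld_ge a x y ha ha2) as [c1 c2].
  assert (C^2 <= (cos (lattice_dist a x y))^2) by (rewrite HC; apply pow_incr; lra).
  pose proof (pow2_ge_0 vx). pose proof (pow2_ge_0 vy). pose proof (pow2_ge_0 vz).
  replace ((C * vz)^2) with (C^2 * vz^2) by ring. nra.
Qed.

Definition cw (f : R -> R) l r := forall t, l <= t <= r -> forall eps, 0 < eps ->
  exists del, 0 < del /\ forall t', l <= t' <= r -> Rabs (t' - t) < del -> Rabs (f t' - f t) < eps.

Lemma cw_glue f l m r : cw f l m -> cw f m r -> l <= m <= r -> cw f l r.
Proof.
  intros H1 H2 Hm t Ht eps He.
  destruct (Rlt_le_dec t m) as [h|h].
  - destruct (H1 t ltac:(lra) eps He) as [d [hd K]].
    exists (Rmin d (m - t)). split. apply Rmin_pos; lra.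
    intros t' ht' hd'. pose proof (Rmin_l d (m - t)). pose proof (Rmin_r d (m - t)).
    apply Rabs_def2 in hd'. apply K. lra. apply Rabs_def1; lra.
  - destruct (Rle_lt_or_eq_dec m t h) as [h'|h'].
    + destruct (H2 t ltac:(lra) eps He) as [d [hd K]].
      exists (Rmin d (t - m)). split. apply Rmin_pos; lra.
      intros t' ht' hd'. pose proof (Rmin_l d (t - m)). pose proof (Rmin_r d (t - m)).
      apply Rabs_def2 in hd'. apply K. lra. apply Rabs_def1; lra.
    + subst t.
      destruct (H1 m ltac:(lra) eps He) as [d1 [hd1 K1]].
      destruct (H2 m ltac:(lra) eps He) as [d2 [hd2 K2]].
      exists (Rmin d1 d2). split. apply Rmin_pos; lra.
      intros t' ht' hd'. pose proof (Rmin_l d1 d2). pose proof (Rmin_r d1 d2).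
      destruct (Rle_dec t' m).
      * apply K1. lra. lra.
      * apply K2. lra. lra.
Qed.

Lemma cont_ed (g : R -> R) t : continuous g t -> forall eps, 0 < eps ->
  exists del, 0 < del /\ forall t', Rabs (t' - t) < del -> Rabs (g t' - g t) < eps.
Proof.
  intros H eps He. destruct (proj1 (filterlim_locally _ _) H (mkposreal eps He)) as [d K].
  exists d. split. apply cond_pos. intros t' h. apply (K t' h).
Qed.

Lemma cw_piece f g l r : (forall t, continuous g t) -> (forall t, l <= t <= r -> f t = g t) -> cw f l r.
Proof.
  intros Hg Hfg t Ht eps He. destruct (cont_ed g t (Hg t) eps He) as [d [hd K]].
  exists d. split; auto. intros t' ht' h. rewrite !Hfg by auto. auto.
Qed.

Lemma cw_pieces (G : R -> R) (P : nat -> R -> R) n (part : nat -> R) :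
  (forall k, (k < n)%nat -> part k < part (S k)) ->
  (forall k t, (k < n)%nat -> continuous (P k) t) ->
  (forall k t, (k < n)%nat -> part k <= t <= part (S k) -> G t = P k t) ->
  cw G (part 0%nat) (part n).
Proof.
  intros hinc hc hag.
  assert (K: forall j, (j <= n)%nat -> cw G (part 0%nat) (part j) /\ part 0%nat <= part j).
  { induction j; intros Hj.
    - split. 2: lra. intros t Ht eps He. exists 1. split. lra. intros t' ht' _.
      replace (t' - t) with 0 by lra. replace (G t' - G t) with 0.
      rewrite Rabs_R0; lra. replace t' with t by lra. ring.
    - destruct (IHj ltac:(lia)) as [A B]. pose proof (hinc j ltac:(lia)).
      split. 2: lra.
      apply cw_glue with (part j); auto. 2: lra.
      apply cw_piece with (P j). intros; apply hc; lia. intros; apply hag; auto; lia. }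
  apply K. lia.
Qed.

Definition sqc (X : R * R -> R) p := forall eps, 0 < eps -> exists del, 0 < del /\
  forall q, in_sq q -> Rabs (fst q - fst p) < del -> Rabs (snd q - snd p) < del ->
  Rabs (X q - X p) < eps.

Lemma sqc_comp (h : R -> R) X p : (forall y, continuous h y) -> sqc X p -> sqc (fun q => h (X q)) p.
Proof.
  intros Hh HX eps He. destruct (cont_ed h (X p) (Hh _) eps He) as [d [hd K]].
  destruct (HX d hd) as [d' [hd' K']]. exists d'. split; auto.
Qed.

Lemma sqc_hom G p : cw G 0 1 -> in_sq p ->
  sqc (fun q => (1 - snd q) * G (fst q) + snd q * G 0) p.
Proof.
  intros HG [[h1 h2] [h3 h4]] eps He. destruct p as [t s]. simpl in *.
  set (K := Rabs (G t) + Rabs (G 0)).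
  assert (HK: 0 <= K) by (unfold K; pose proof (Rabs_pos (G t)); pose proof (Rabs_pos (G 0)); lra).
  destruct (HG t ltac:(lra) (eps/2) ltac:(lra)) as [d [hd Kd]].
  exists (Rmin d (eps / (2 * (1 + K)))). split. apply Rmin_pos; auto. apply Rdiv_lt_0_compat; lra.
  intros [t' s'] [[k1 k2] [k3 k4]] e1 e2. simpl in *.
  pose proof (Rmin_l d (eps / (2 * (1 + K)))). pose proof (Rmin_r d (eps / (2 * (1 + K)))).
  assert (A: Rabs (G t' - G t) < eps / 2) by (apply Kd; lra).
  replace ((1 - s') * G t' + s' * G 0 - ((1 - s) * G t + s * G 0)) with
    ((1 - s') * (G t' - G t) + (s' - s) * (G 0 - G t)) by ring.
  eapply Rle_lt_trans. apply Rabs_triang. rewrite !Rabs_mult.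
  rewrite (Rabs_pos_eq (1 - s')) by lra.
  assert (B: Rabs (G 0 - G t) <= K).
  { unfold K. unfold Rminus. eapply Rle_trans. apply Rabs_triang. rewrite Rabs_Ropp. lra. }
  assert (C1: Rabs (s' - s) * Rabs (G 0 - G t) <= Rabs (s' - s) * K)
    by (apply Rmult_le_compat_l; auto; apply Rabs_pos).
  assert (C2: Rabs (s' - s) * K < eps / 2).
  { assert (Rabs (s' - s) < eps / (2 * (1 + K))) by lra.
    assert (Rabs (s' - s) * (1 + K) < eps / 2).
    { apply (Rmult_lt_compat_r (1 + K)) in H1. 2: lra.
      replace (eps / (2 * (1 + K)) * (1 + K)) with (eps / 2) in H1 by (field; lra). exact H1. }
    pose proof (Rabs_pos (s' - s)). nra. }
  assert (C3: (1 - s') * Rabs (G t' - G t) <= Rabs (G t' - G t)).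
  { pose proof (Rabs_pos (G t' - G t)). nra. }
  lra.
Qed.

Lemma circ_cont L : L <> 0 -> forall i : bool, forall y,
  continuous (fun x => if i then cos (2 * PI * x / L) else sin (2 * PI * x / L)) y.
Proof.
  intros HL i y. assert (Hl: continuous (fun x => 2 * PI * x / L) y).
  { apply cmult. apply cmult. apply continuous_const. apply continuous_id. apply continuous_const. }
  destruct i.
  - apply continuous_cos_comp. exact Hl.
  - apply continuous_sin_comp. exact Hl.
Qed.

Lemma hom_cont L G : L <> 0 -> cw G 0 1 ->
  cont_on_sq (fun q => circ L ((1 - snd q) * G (fst q) + snd q * G 0)).
Proof.
  intros HL HG. apply ed_cos. intros p Hp eps He.
  destruct (sqc_comp _ _ p (circ_cont L HL true) (sqc_hom G p HG Hp) eps He) as [d1 [h1 K1]].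
  destruct (sqc_comp _ _ p (circ_cont L HL false) (sqc_hom G p HG Hp) eps He) as [d2 [h2 K2]].
  exists (Rmin d1 d2). split. apply Rmin_pos; auto.
  intros q Hq e1 e2. pose proof (Rmin_l d1 d2). pose proof (Rmin_r d1 d2).
  unfold circ; simpl. split.
  - apply (K1 q Hq); lra.
  - apply (K2 q Hq); lra.
Qed.

Lemma circ_on L x : on_circle (circ L x).
Proof. unfold on_circle, circ; simpl. pose proof (sin2_cos2 (2 * PI * x / L)). unfold Rsqr in H. lra. Qed.

Lemma contract a c : 0 < a -> piecewise_smooth c ->
  cx c 1 = cx c 0 -> cy c 1 = cy c 0 -> cz c 1 = cz c 0 -> contractible_in_T a c.
Proof.
  intros ha [h0 [h1 [hinc [hsm hag]]]] ex ey ez.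
  assert (Hx: cw (cx c) 0 1).
  { assert (W: cw (cx c) (part c 0%nat) (part c (npieces c))). 2: rewrite h0, h1 in W; exact W.
    apply cw_pieces with (px c); auto.
    intros k t hk. apply smooth_cont. exact (proj1 (hsm k hk)). intros k t hk ht. exact (proj1 (hag k t hk ht)). }
  assert (Hy: cw (cy c) 0 1).
  { assert (W: cw (cy c) (part c 0%nat) (part c (npieces c))). 2: rewrite h0, h1 in W; exact W.
    apply cw_pieces with (py c); auto.
    intros k t hk. apply smooth_cont. exact ((fun h => proj1 (proj2 h)) (hsm k hk)). intros k t hk ht. exact ((fun h => proj1 (proj2 h)) (hag k t hk ht)). }
  assert (Hz: cw (cz c) 0 1).
  { assert (W: cw (cz c) (part c 0%nat) (part c (npieces c))). 2: rewrite h0, h1 in W; exact W.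
    apply cw_pieces with (pz c); auto.
    intros k t hk. apply smooth_cont. exact ((fun h => proj2 (proj2 h)) (hsm k hk)). intros k t hk ht. exact ((fun h => proj2 (proj2 h)) (hag k t hk ht)). }
  pose proof PI_RGT_0.
  exists (fun q => circ (4 * a) ((1 - snd q) * cx c (fst q) + snd q * cx c 0)),
         (fun q => circ (4 * a) ((1 - snd q) * cy c (fst q) + snd q * cy c 0)),
         (fun q => circ (2 * PI) ((1 - snd q) * cz c (fst q) + snd q * cz c 0)).
  split. apply hom_cont; auto; lra.
  split. apply hom_cont; auto; lra.
  split. apply hom_cont; auto; lra.
  split. intros; split; [|split]; apply circ_on.
  split. intros t Ht; simpl. split; [|split]; f_equal; ring.
  split. exists (circ (4 * a) (cx c 0)), (circ (4 * a) (cy c 0)), (circ (2 * PI) (cz c 0)).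
    intros t Ht; simpl. split; [|split]; f_equal; ring.
  intros s Hs; simpl. rewrite ex, ey, ez. split; [|split]; f_equal; ring.
Qed.

Lemma Lx a c K : piecewise_smooth c -> K ^ 2 = 1 -> K * (cx c 1 - cx c 0) <= h_length a c.
Proof.
  intros Hp HK. pose proof Hp as [h0 [h1 [hinc [hsm hag]]]].
  apply length_bound with (P := px c); auto.
  intros k hk. exact (proj1 (hsm k hk)).
  intros k t hk ht. exact (proj1 (hag k t hk ht)).
  intros k t hk. unfold integrand. apply hx_bound. auto.
Qed.

Lemma Ly a c K : piecewise_smooth c -> K ^ 2 = 1 -> K * (cy c 1 - cy c 0) <= h_length a c.
Proof.
  intros Hp HK. pose proof Hp as [h0 [h1 [hinc [hsm hag]]]].
  apply length_bound with (P := py c); auto.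
  intros k hk. exact (proj1 (proj2 (hsm k hk))).
  intros k t hk ht. exact (proj1 (proj2 (hag k t hk ht))).
  intros k t hk. unfold integrand. apply hy_bound. auto.
Qed.

Lemma Lz a c K : 0 < a -> a * sqrt 2 < PI / 2 -> piecewise_smooth c ->
  K ^ 2 = (cos (a * sqrt 2)) ^ 2 -> K * (cz c 1 - cz c 0) <= h_length a c.
Proof.
  intros ha ha2 Hp HK. pose proof Hp as [h0 [h1 [hinc [hsm hag]]]].
  apply length_bound with (P := pz c); auto.
  intros k hk. exact (proj2 (proj2 (hsm k hk))).
  intros k t hk ht. exact (proj2 (proj2 (hag k t hk ht))).
  intros k t hk. unfold integrand. apply hz_bound; auto.
Qed.

Lemma Zcases (m : Z) : m = 0%Z \/ 1 <= IZR m \/ IZR m <= -1.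
Proof.
  destruct (Z.lt_trichotomy m 0) as [h|[h|h]].
  - right; right. apply IZR_le. lia.
  - left; auto.
  - right; left. apply IZR_le. lia.
Qed.

Lemma lower a c : 0 < a -> a * sqrt 2 < PI / 2 -> piecewise_smooth c -> closed_in_T a c ->
  ~ contractible_in_T a c -> Rmin (4 * a) (2 * PI * cos (a * sqrt 2)) <= h_length a c.
Proof.
  intros ha ha2 Hp [m [n [k [em [en ek]]]]] Hnc.
  pose proof (Rmin_l (4 * a) (2 * PI * cos (a * sqrt 2))).
  pose proof (Rmin_r (4 * a) (2 * PI * cos (a * sqrt 2))).
  destruct (cos_ld_ge a 0 0 ha ha2) as [cpos _].
  pose proof PI_RGT_0.
  destruct (Zcases m) as [m0|[m1|m1]].
  2:{ pose proof (Lx a c 1 Hp ltac:(ring)). rewrite em in H2. nra. }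
  2:{ pose proof (Lx a c (-1) Hp ltac:(ring)). rewrite em in H2. nra. }
  destruct (Zcases n) as [n0|[n1|n1]].
  2:{ pose proof (Ly a c 1 Hp ltac:(ring)). rewrite en in H2. nra. }
  2:{ pose proof (Ly a c (-1) Hp ltac:(ring)). rewrite en in H2. nra. }
  destruct (Zcases k) as [k0|[k1|k1]].
  2:{ pose proof (Lz a c (cos (a * sqrt 2)) ha ha2 Hp eq_refl). rewrite ek in H2.
        assert (0 <= (cos (a * sqrt 2) * (2 * PI)) * (IZR k - 1)) by (apply Rmult_le_pos; nra). nra. }
  2:{ pose proof (Lz a c (- cos (a * sqrt 2)) ha ha2 Hp ltac:(ring)). rewrite ek in H2.
        assert (0 <= (cos (a * sqrt 2) * (2 * PI)) * (- IZR k - 1)) by (apply Rmult_le_pos; nra). nra. }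
  subst m n k. simpl in em, en, ek.
  exfalso. apply Hnc. apply contract; auto; lra.
Qed.

Definition mkc (X Y Z : R -> R) : curve3 :=
  {| cx := X; cy := Y; cz := Z; npieces := 1; part := INR;
     px := fun _ => X; py := fun _ => Y; pz := fun _ => Z |}.

Lemma mkc_ps X Y Z : smooth X -> smooth Y -> smooth Z -> piecewise_smooth (mkc X Y Z).
Proof.
  intros. unfold piecewise_smooth; simpl. split; [auto|]. split; [auto|].
  split. intros k hk. assert (k = 0%nat) by lia. subst. simpl. lra.
  split. intros; auto. intros; auto.
Qed.

Lemma mkc_len a X Y Z : h_length a (mkc X Y Z) =
  RInt (fun t => h_norm a (X t) (Y t) (Derive X t) (Derive Y t) (Derive Z t)) 0 1.
Proof. unfold h_length; simpl. ring. Qed.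

Lemma RInt_c01 (f : R -> R) v : (forall t, f t = v) -> RInt f 0 1 = v.
Proof.
  intros H. rewrite (RInt_ext f (fun _ => v)). rewrite RInt_const.
  unfold scal; simpl; unfold mult; simpl. ring. intros; auto.
Qed.

Lemma Dlin al be t : Derive (fun t => al * t + be) t = al.
Proof. apply is_derive_unique. apply affine_Derive with be. auto. Qed.

Lemma circ_lin L t : L <> 0 -> circ L (L * t) = (cos (2 * PI * t), sin (2 * PI * t)).
Proof. intros HL. unfold circ. replace (2 * PI * (L * t) / L) with (2 * PI * t) by (field; auto). reflexivity. Qed.

Theorem mainTheorem2 (a : R) (ha : 0 < a) (ha2 : a * sqrt 2 < PI / 2) :
  systole a = Finite (Rmin (4 * a) (2 * PI * cos (a * sqrt 2))).
Proof.
  pose proof PI_RGT_0.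
  destruct (cos_ld_ge a 0 0 ha ha2) as [cpos _].
  unfold systole. apply is_glb_Rbar_unique. split.
  - intros L [c [Hp [Hc [Hn HL]]]]. simpl. rewrite HL. apply lower; auto.
  - intros b Hb. apply Hb.
    destruct (Rle_dec (4 * a) (2 * PI * cos (a * sqrt 2))) as [hle|hle].
    + rewrite Rmin_left by auto.
      exists (mkc (fun t => 4 * a * t + 0) (fun t => 0 * t + 0) (fun t => 0 * t + 0)).
      split. apply mkc_ps; eapply affine_smooth; intros; reflexivity.
      split. exists 1%Z, 0%Z, 0%Z. simpl. split; [|split]; ring.
      split.
      * intros [u1 [u2 [u3 [c1 [c2 [c3 [hc [h0 [[q1 [q2 [q3 hq]]] hb]]]]]]]]].
        apply (no_contract u1 q1 c1).
        intros p hp. apply (hc p hp).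
        intros t ht. rewrite (proj1 (h0 t ht)). simpl. rewrite Rplus_0_r. apply circ_lin. lra.
        intros t ht. apply (proj1 (hq t ht)).
        intros s hs. apply (proj1 (hb s hs)).
      * rewrite mkc_len. symmetry. apply RInt_c01. intros t.
        rewrite !Dlin. unfold h_norm.
        replace ((4 * a) ^ 2 + 0 ^ 2 + cos (lattice_dist a (4 * a * t + 0) (0 * t + 0)) ^ 2 * 0 ^ 2)
          with ((4 * a) ^ 2) by ring. apply sqrt_pow2. lra.
    + rewrite Rmin_right by lra.
      exists (mkc (fun t => 0 * t + a) (fun t => 0 * t + a) (fun t => 2 * PI * t + 0)).
      split. apply mkc_ps; eapply affine_smooth; intros; reflexivity.
      split. exists 0%Z, 0%Z, 1%Z. simpl. split; [|split]; ring.
      split.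
      * intros [u1 [u2 [u3 [c1 [c2 [c3 [hc [h0 [[q1 [q2 [q3 hq]]] hb]]]]]]]]].
        apply (no_contract u3 q3 c3).
        intros p hp. apply (hc p hp).
        intros t ht. rewrite (proj2 (proj2 (h0 t ht))). simpl. rewrite Rplus_0_r. apply circ_lin. lra.
        intros t ht. apply (proj2 (proj2 (hq t ht))).
        intros s hs. apply (proj2 (proj2 (hb s hs))).
      * rewrite mkc_len. symmetry. apply RInt_c01. intros t.
        rewrite !Dlin. unfold h_norm.
        replace (0 * t + a) with a by ring. rewrite ld_aa by auto.
        replace (0 ^ 2 + 0 ^ 2 + cos (a * sqrt 2) ^ 2 * (2 * PI) ^ 2)
          with ((2 * PI * cos (a * sqrt 2)) ^ 2) by ring. apply sqrt_pow2. nra.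
Qed.
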